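(* On an open subset of $\mathbb{R}^2$ where $c_3\mp(x^1+c_1)^2\mp(x^2+c_2)^2>0$, let $$\alpha=e^{\sigma(x)}\sqrt{(y^1)^2+(y^2)^2},\qquad \beta=e^{\sigma(x)}(\xi(x)y^1+\eta(x)y^2),$$ with $$\xi=\pm\frac{1}{\sqrt2}\frac{x^2+c_2}{\sqrt{c_3\mp(x^1+c_1)^2\mp(x^2+c_2)^2}},\quad \eta=\mp\frac{1}{\sqrt2}\frac{x^1+c_1}{\sqrt{c_3\mp(x^1+c_1)^2\mp(x^2+c_2)^2}},\quad \sigma=\ln\big[c_3\mp(x^1+c_1)^2\mp(x^2+c_2)^2\big]+c_4,$$ where $c_1,c_2,c_3,c_4$ are constants with $c_3>0$. Then $F=\alpha\pm\beta^2/\alpha$ is projectively flat and $\beta$ is not closed. (Upper signs throughout correspond to $F=\alpha+\beta^2/\alpha$, lower signs to $F=\alpha-\beta^2/\alpha$.)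
   Context: For a Riemannian metric $\alpha$ and a 1-form $\beta=b_iy^i$, $\beta$ is closed if $d\beta=0$, i.e. $s_{ij}=\frac12(b_{i|j}-b_{j|i})=0$. The spray coefficients of a Finsler metric $F$ are $G^i=\frac14 g^{il}\{[F^2]_{x^ky^l}y^k-[F^2]_{x^l}\}$ with $g_{ij}=\frac12[F^2]_{y^iy^j}$. $F$ is projectively flat on an open $U\subset\mathbb{R}^n$ if $G^i=P(x,y)y^i$ in the standard coordinates of $U$ for some function $P$. *)

(* Defs.v *)
From Stdlib Require Import Reals Lra ClassicalEpsilon.
Open Scope R_scope.

(* Functions on the tangent bundle T R^2 = R^2 x R^2, arguments (x1, x2, y1, y2). *)
Definition R4f := R -> R -> R -> R -> R.

(* Coordinates are indexed 0,1 (x^1, x^2) and 2,3 (y^1, y^2). *)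
Definition coord (k : nat) (x1 x2 y1 y2 : R) : R :=
  match k with 0 => x1 | 1 => x2 | 2 => y1 | _ => y2 end.

Definition along (f : R4f) (k : nat) (x1 x2 y1 y2 : R) : R -> R :=
  fun t => match k with
           | 0 => f t x2 y1 y2
           | 1 => f x1 t y1 y2
           | 2 => f x1 x2 t y2
           | _ => f x1 x2 y1 t
           end.

Definition hasPD (f : R4f) (k : nat) (x1 x2 y1 y2 : R) : Prop :=
  exists l, derivable_pt_lim (along f k x1 x2 y1 y2) (coord k x1 x2 y1 y2) l.

Definition pd (f : R4f) (k : nat) : R4f :=
  fun x1 x2 y1 y2 =>
    epsilon (inhabits 0)
      (fun l => derivable_pt_lim (along f k x1 x2 y1 y2) (coord k x1 x2 y1 y2) l).

Definition yv (k : nat) (y1 y2 : R) : R := match k with 0 => y1 | _ => y2 end.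

Section Spray.
Variable F : R4f.

Definition Lsq : R4f := fun x1 x2 y1 y2 => (F x1 x2 y1 y2) ^ 2.
Definition Ly (l : nat) : R4f := pd Lsq (2 + l).
Definition gmet (i j : nat) : R4f :=
  fun x1 x2 y1 y2 => / 2 * pd (Ly j) (2 + i) x1 x2 y1 y2.
Definition gdet : R4f := fun x1 x2 y1 y2 =>
  gmet 0 0 x1 x2 y1 y2 * gmet 1 1 x1 x2 y1 y2
  - gmet 0 1 x1 x2 y1 y2 * gmet 1 0 x1 x2 y1 y2.
Definition ginv (i l : nat) : R4f := fun x1 x2 y1 y2 =>
  match i, l with
  | 0, 0 => gmet 1 1 x1 x2 y1 y2 / gdet x1 x2 y1 y2
  | 0, _ => - gmet 0 1 x1 x2 y1 y2 / gdet x1 x2 y1 y2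
  | _, 0 => - gmet 1 0 x1 x2 y1 y2 / gdet x1 x2 y1 y2
  | _, _ => gmet 0 0 x1 x2 y1 y2 / gdet x1 x2 y1 y2
  end.
Definition sprayTerm (l : nat) : R4f := fun x1 x2 y1 y2 =>
  pd (Ly l) 0 x1 x2 y1 y2 * y1 + pd (Ly l) 1 x1 x2 y1 y2 * y2
  - pd Lsq l x1 x2 y1 y2.
Definition spray (i : nat) : R4f := fun x1 x2 y1 y2 =>
  / 4 * (ginv i 0 x1 x2 y1 y2 * sprayTerm 0 x1 x2 y1 y2
         + ginv i 1 x1 x2 y1 y2 * sprayTerm 1 x1 x2 y1 y2).

Definition spray_derivs_exist (x1 x2 y1 y2 : R) : Prop :=
  (forall k, (k < 4)%nat -> hasPD Lsq k x1 x2 y1 y2) /\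
  (forall l k, (l < 2)%nat -> (k < 4)%nat -> hasPD (Ly l) k x1 x2 y1 y2).
End Spray.

Definition open2 (U : R -> R -> Prop) : Prop :=
  forall x1 x2, U x1 x2 -> exists eps, 0 < eps /\
    forall z1 z2, Rabs (z1 - x1) < eps -> Rabs (z2 - x2) < eps -> U z1 z2.

Definition projectively_flat_on (F : R4f) (U : R -> R -> Prop) : Prop :=
  (forall x1 x2 y1 y2, U x1 x2 -> (y1, y2) <> (0, 0) ->
      spray_derivs_exist F x1 x2 y1 y2) /\
  exists P : R4f, forall x1 x2 y1 y2, U x1 x2 -> (y1, y2) <> (0, 0) ->
      gdet F x1 x2 y1 y2 <> 0 ->
      spray F 0 x1 x2 y1 y2 = P x1 x2 y1 y2 * y1 /\
      spray F 1 x1 x2 y1 y2 = P x1 x2 y1 y2 * y2.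

(* A 1-form beta = b1(x) dx^1 + b2(x) dx^2 on U is closed iff
   d beta = (d b2/dx^1 - d b1/dx^2) dx^1 /\ dx^2 vanishes on U. *)
Definition lift2 (b : R -> R -> R) : R4f := fun x1 x2 _ _ => b x1 x2.
Definition one_form_closed_on (b1 b2 : R -> R -> R) (U : R -> R -> Prop) : Prop :=
  forall x1 x2, U x1 x2 ->
    (forall k, (k < 2)%nat -> hasPD (lift2 b1) k x1 x2 0 0 /\ hasPD (lift2 b2) k x1 x2 0 0) /\
    pd (lift2 b2) 0 x1 x2 0 0 - pd (lift2 b1) 1 x1 x2 0 0 = 0.

(* The data of the theorem; s = 1 for the upper signs, s = -1 for the lower. *)
Definition Qf (s c1 c2 c3 : R) (x1 x2 : R) : R :=
  c3 - s * (x1 + c1) ^ 2 - s * (x2 + c2) ^ 2.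
Definition xi_f (s c1 c2 c3 : R) (x1 x2 : R) : R :=
  s * (/ sqrt 2) * ((x2 + c2) / sqrt (Qf s c1 c2 c3 x1 x2)).
Definition eta_f (s c1 c2 c3 : R) (x1 x2 : R) : R :=
  - s * (/ sqrt 2) * ((x1 + c1) / sqrt (Qf s c1 c2 c3 x1 x2)).
Definition sigma_f (s c1 c2 c3 c4 : R) (x1 x2 : R) : R :=
  ln (Qf s c1 c2 c3 x1 x2) + c4.
Definition alpha_f (s c1 c2 c3 c4 : R) : R4f := fun x1 x2 y1 y2 =>
  exp (sigma_f s c1 c2 c3 c4 x1 x2) * sqrt (y1 ^ 2 + y2 ^ 2).
Definition b1_f (s c1 c2 c3 c4 : R) (x1 x2 : R) : R :=
  exp (sigma_f s c1 c2 c3 c4 x1 x2) * xi_f s c1 c2 c3 x1 x2.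
Definition b2_f (s c1 c2 c3 c4 : R) (x1 x2 : R) : R :=
  exp (sigma_f s c1 c2 c3 c4 x1 x2) * eta_f s c1 c2 c3 x1 x2.
Definition beta_f (s c1 c2 c3 c4 : R) : R4f := fun x1 x2 y1 y2 =>
  b1_f s c1 c2 c3 c4 x1 x2 * y1 + b2_f s c1 c2 c3 c4 x1 x2 * y2.
Definition F_f (s c1 c2 c3 c4 : R) : R4f := fun x1 x2 y1 y2 =>
  alpha_f s c1 c2 c3 c4 x1 x2 y1 y2
  + s * (beta_f s c1 c2 c3 c4 x1 x2 y1 y2) ^ 2 / alpha_f s c1 c2 c3 c4 x1 x2 y1 y2.

(* Main.v *)
Require Import Defs.
From Stdlib Require Import Reals Lra Lia Nsatz ClassicalEpsilon.
From Coquelicot Require Import Coquelicot.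
Open Scope R_scope.

Definition rr (y1 y2 : R) := sqrt (y1^2 + y2^2).
Definition ww (c1 c2 x1 x2 y1 y2 : R) := (x2+c2)*y1 - (x1+c1)*y2.
Definition Fs (s c1 c2 c3 K : R) : R4f := fun x1 x2 y1 y2 =>
  K*(Qf s c1 c2 c3 x1 x2 * rr y1 y2 + s*(ww c1 c2 x1 x2 y1 y2)^2/(2*rr y1 y2)).

Definition FdE (s c1 c2 c3 K : R) (k : nat) : R4f := fun x1 x2 y1 y2 =>
  let Q := Qf s c1 c2 c3 x1 x2 in let r := rr y1 y2 in let w := ww c1 c2 x1 x2 y1 y2 in
  let u1 := x1 + c1 in let u2 := x2 + c2 in
  match k with
  | 0 => K*(-2*s*u1*r - s*w*y2/r)
  | 1 => K*(-2*s*u2*r + s*w*y1/r)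
  | 2 => K*(Q*y1/r + s*w*u2/r - s*w^2*y1/(2*r^3))
  | _ => K*(Q*y2/r - s*w*u1/r - s*w^2*y2/(2*r^3))
  end.

Definition FyyE (s c1 c2 c3 K : R) (l k : nat) : R4f := fun x1 x2 y1 y2 =>
  let Q := Qf s c1 c2 c3 x1 x2 in let r := rr y1 y2 in let w := ww c1 c2 x1 x2 y1 y2 in
  let u1 := x1 + c1 in let u2 := x2 + c2 in
  match l, k with
  | 0, 0 => K*(-2*s*u1*y1/r - s*u2*y2/r + s*w*y1*y2/r^3)
  | 0, 1 => K*(-2*s*u2*y1/r + s*(u2*y1 + w)/r - s*w*y1^2/r^3)
  | 0, 2 => K*(Q*(1/r - y1^2/r^3) + s*(u2^2/r - w*u2*y1/r^3)
               - s*(2*w*u2*y1 + w^2)/(2*r^3) + 3*s*w^2*y1^2/(2*r^5))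
  | 0, _ => K*(-Q*y1*y2/r^3 + s*(-u1*u2/r - w*u2*y2/r^3) + s*w*u1*y1/r^3
               + 3*s*w^2*y1*y2/(2*r^5))
  | _, 0 => K*(-2*s*u1*y2/r + s*(u1*y2 - w)/r + s*w*y2^2/r^3)
  | _, 1 => K*(-2*s*u2*y2/r - s*u1*y1/r - s*w*y1*y2/r^3)
  | _, 2 => K*(-Q*y1*y2/r^3 - s*(u1*u2/r - w*u1*y1/r^3) - s*w*u2*y2/r^3
               + 3*s*w^2*y1*y2/(2*r^5))
  | _, _ => K*(Q*(1/r - y2^2/r^3) - s*(-u1^2/r - w*u1*y2/r^3)
               - s*(-2*w*u1*y2 + w^2)/(2*r^3) + 3*s*w^2*y2^2/(2*r^5))
  end.

Ltac dtac y1 y2 :=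
  apply is_derive_Reals; unfold along, coord, Fs, FdE, FyyE, Qf, rr, ww; cbv beta iota zeta delta [Nat.add];
  assert (sqrt (y1^2+y2^2) <> 0) by (apply Rgt_not_eq, sqrt_lt_R0; lra);
  auto_derive; [repeat split; auto; cbn [pow] in *; repeat apply Rmult_integral_contrapositive_currified; auto; lra | cbn [pow] in *; field; auto].

Lemma dF s c1 c2 c3 K k x1 x2 y1 y2 : 0 < y1^2+y2^2 ->
  derivable_pt_lim (along (Fs s c1 c2 c3 K) k x1 x2 y1 y2) (coord k x1 x2 y1 y2)
    (FdE s c1 c2 c3 K k x1 x2 y1 y2).
Proof. intros h; destruct k as [|[|[|k]]]; dtac y1 y2. Qed.

Lemma dFy s c1 c2 c3 K l k x1 x2 y1 y2 : 0 < y1^2+y2^2 ->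
  derivable_pt_lim (along (FdE s c1 c2 c3 K (2+l)) k x1 x2 y1 y2) (coord k x1 x2 y1 y2)
    (FyyE s c1 c2 c3 K l k x1 x2 y1 y2).
Proof. intros h; destruct l as [|l]; destruct k as [|[|[|k]]]; dtac y1 y2. Qed.

Ltac idtac_r y1 y2 :=
  unfold Fs, FdE, FyyE, Qf, rr, ww; cbv beta iota zeta delta [Nat.add];
  let r := fresh "r" in
  assert (hr : sqrt (y1^2+y2^2) * sqrt (y1^2+y2^2) = y1^2+y2^2) by (apply sqrt_sqrt; lra);
  assert (hr0 : sqrt (y1^2+y2^2) <> 0) by (apply Rgt_not_eq, sqrt_lt_R0; lra);
  set (r := sqrt (y1^2+y2^2)) in *; clearbody r;
  field_simplify_eq; [cbn [pow] in *; nsatz | auto].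

Lemma I1 s c1 c2 c3 K x1 x2 y1 y2 : 0 < y1^2+y2^2 ->
  FdE s c1 c2 c3 K 2 x1 x2 y1 y2 * y1 + FdE s c1 c2 c3 K 3 x1 x2 y1 y2 * y2
  = Fs s c1 c2 c3 K x1 x2 y1 y2.
Proof. intros h. idtac_r y1 y2. Qed.

Lemma I2 s c1 c2 c3 K i x1 x2 y1 y2 : 0 < y1^2+y2^2 ->
  FyyE s c1 c2 c3 K 0 (2+i) x1 x2 y1 y2 * y1 + FyyE s c1 c2 c3 K 1 (2+i) x1 x2 y1 y2 * y2 = 0.
Proof. intros h. destruct i as [|i]; idtac_r y1 y2. Qed.

Lemma IH s c1 c2 c3 K l x1 x2 y1 y2 : (l < 2)%nat -> 0 < y1^2+y2^2 ->
  FyyE s c1 c2 c3 K l 0 x1 x2 y1 y2 * y1 + FyyE s c1 c2 c3 K l 1 x1 x2 y1 y2 * y2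
  = FdE s c1 c2 c3 K l x1 x2 y1 y2.
Proof. intros hl h. destruct l as [|[|l]]; [idtac_r y1 y2|idtac_r y1 y2|exfalso; lia]. Qed.

Definition Wp (U : R -> R -> Prop) (x1 x2 y1 y2 : R) := U x1 x2 /\ 0 < y1^2 + y2^2.

Lemma Wp_open U x1 x2 y1 y2 : open2 U -> Wp U x1 x2 y1 y2 ->
  exists e, 0 < e /\ forall z1 z2 z3 z4, Rabs (z1-x1) < e -> Rabs (z2-x2) < e ->
    Rabs (z3-y1) < e -> Rabs (z4-y2) < e -> Wp U z1 z2 z3 z4.
Proof.
intros hU [hx hy]. destruct (hU x1 x2 hx) as [eps [he hE]].
destruct (Req_dec y1 0) as [h1|h1].
- assert (h2 : y2 <> 0) by (intro; subst; nra).
  exists (Rmin eps (Rabs y2)). split.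
  + apply Rmin_pos; auto. apply Rabs_pos_lt; auto.
  + intros z1 z2 z3 z4 a1 a2 a3 a4. split.
    * apply hE; eapply Rlt_le_trans; eauto; apply Rmin_l.
    * assert (z4 <> 0). { intro; subst. assert (Rabs (0 - y2) < Rabs y2).
        { eapply Rlt_le_trans; eauto; apply Rmin_r. }
        replace (0 - y2) with (- y2) in H by ring. rewrite Rabs_Ropp in H. lra. }
      nra.
- exists (Rmin eps (Rabs y1)). split.
  + apply Rmin_pos; auto. apply Rabs_pos_lt; auto.
  + intros z1 z2 z3 z4 a1 a2 a3 a4. split.
    * apply hE; eapply Rlt_le_trans; eauto; apply Rmin_l.
    * assert (z3 <> 0). { intro; subst. assert (Rabs (0 - y1) < Rabs y1).
        { eapply Rlt_le_trans; eauto; apply Rmin_r. }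
        replace (0 - y1) with (- y1) in H by ring. rewrite Rabs_Ropp in H. lra. }
      nra.
Qed.

Lemma along_loc U (f g : R4f) k x1 x2 y1 y2 :
  (forall z1 z2 z3 z4, Wp U z1 z2 z3 z4 -> f z1 z2 z3 z4 = g z1 z2 z3 z4) ->
  open2 U -> Wp U x1 x2 y1 y2 ->
  exists e, 0 < e /\ forall t, Rabs (t - coord k x1 x2 y1 y2) < e ->
    along f k x1 x2 y1 y2 t = along g k x1 x2 y1 y2 t.
Proof.
intros hfg hU hW. destruct (Wp_open U x1 x2 y1 y2 hU hW) as [e [he hE]].
assert (z0 : forall a, Rabs (a - a) < e) by (intro a; replace (a - a) with 0 by ring; rewrite Rabs_R0; auto).
exists e; split; auto. intros t ht.
destruct k as [|[|[|k]]]; simpl in *; apply hfg, hE; auto.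
Qed.

Lemma dpl_loc (f g : R -> R) x l :
  (exists e, 0 < e /\ forall t, Rabs (t - x) < e -> f t = g t) ->
  derivable_pt_lim f x l -> derivable_pt_lim g x l.
Proof.
intros [e [he hE]] hd eps heps. destruct (hd eps heps) as [d hD].
assert (hm : 0 < Rmin d e) by (apply Rmin_pos; auto; apply cond_pos).
exists (mkposreal _ hm). intros h hh hlt. simpl in hlt.
rewrite <- (hE (x+h)), <- (hE x).
- apply hD; auto. eapply Rlt_le_trans; eauto; apply Rmin_l.
- replace (x - x) with 0 by ring; rewrite Rabs_R0; auto.
- replace (x + h - x) with h by ring. eapply Rlt_le_trans; eauto; apply Rmin_r.
Qed.

Lemma dpl_ext (f g : R -> R) x l : (forall t, f t = g t) ->
  derivable_pt_lim f x l -> derivable_pt_lim g x l.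
Proof. intros hfg. apply dpl_loc. exists 1; split; [lra|auto]. Qed.

Lemma PDV (f : R4f) k x1 x2 y1 y2 l :
  derivable_pt_lim (along f k x1 x2 y1 y2) (coord k x1 x2 y1 y2) l ->
  hasPD f k x1 x2 y1 y2 /\ pd f k x1 x2 y1 y2 = l.
Proof.
intros hd. split; [exists l; auto|]. unfold pd.
pose proof (epsilon_spec (inhabits 0)
  (fun l => derivable_pt_lim (along f k x1 x2 y1 y2) (coord k x1 x2 y1 y2) l) (ex_intro _ l hd)) as he.
eapply uniqueness_limite; eauto.
Qed.

Lemma dsq (f : R -> R) x l : derivable_pt_lim f x l ->
  derivable_pt_lim (fun t => (f t)^2) x (2 * f x * l).
Proof.
intros hd. pose proof (derivable_pt_lim_mult f f x l l hd hd) as hm.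
replace (2 * f x * l) with (l * f x + f x * l) by ring.
eapply dpl_ext; [|exact hm]. intro t. unfold mult_fct. ring.
Qed.

Lemma dprod2 (f g : R -> R) x a b : derivable_pt_lim f x a -> derivable_pt_lim g x b ->
  derivable_pt_lim (fun t => 2 * f t * g t) x (2 * (a * g x + f x * b)).
Proof.
intros ha hb. pose proof (derivable_pt_lim_mult f g x a b ha hb) as hm.
pose proof (derivable_pt_lim_scal (mult_fct f g) 2 x _ hm) as hs.
eapply dpl_ext; [|exact hs]. intro t. unfold mult_real_fct, mult_fct. ring.
Qed.

Lemma along_sq (G : R4f) k x1 x2 y1 y2 t :
  along (Lsq G) k x1 x2 y1 y2 t = (along G k x1 x2 y1 y2 t)^2.
Proof. destruct k as [|[|[|k]]]; reflexivity. Qed.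

Lemma along_prod (G H : R4f) k x1 x2 y1 y2 t :
  along (fun z1 z2 z3 z4 => 2 * G z1 z2 z3 z4 * H z1 z2 z3 z4) k x1 x2 y1 y2 t
  = 2 * along G k x1 x2 y1 y2 t * along H k x1 x2 y1 y2 t.
Proof. destruct k as [|[|[|k]]]; reflexivity. Qed.

Lemma along_at (G : R4f) k x1 x2 y1 y2 :
  along G k x1 x2 y1 y2 (coord k x1 x2 y1 y2) = G x1 x2 y1 y2.
Proof. destruct k as [|[|[|k]]]; reflexivity. Qed.

Lemma Ff_eq s c1 c2 c3 c4 x1 x2 y1 y2 : (s = 1 \/ s = -1) -> 0 < Qf s c1 c2 c3 x1 x2 ->
  F_f s c1 c2 c3 c4 x1 x2 y1 y2 = Fs s c1 c2 c3 (exp c4) x1 x2 y1 y2.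
Proof.
intros hs hQ. unfold F_f, alpha_f, beta_f, b1_f, b2_f, xi_f, eta_f, sigma_f, Fs, rr, ww.
rewrite exp_plus, exp_ln by auto.
assert (hss : s * s = 1) by (destruct hs; subst; ring).
set (Q := Qf s c1 c2 c3 x1 x2) in *.
assert (hq : sqrt Q * sqrt Q = Q) by (apply sqrt_sqrt; lra).
assert (hq0 : sqrt Q <> 0) by (apply Rgt_not_eq, sqrt_lt_R0; lra).
assert (ht : sqrt 2 * sqrt 2 = 2) by (apply sqrt_sqrt; lra).
assert (ht0 : sqrt 2 <> 0) by (apply Rgt_not_eq, sqrt_lt_R0; lra).
assert (hK : exp c4 <> 0) by (apply Rgt_not_eq, exp_pos).
destruct (Req_dec (sqrt (y1^2+y2^2)) 0) as [h0|h0].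
- assert (y1 = 0 /\ y2 = 0) as [-> ->].
  { assert (y1^2+y2^2 = 0) by (apply sqrt_eq_0; [nra|auto]). split; nra. }
  replace (0^2+0^2) with 0 by ring. rewrite sqrt_0. clearbody Q. unfold Rdiv. ring.
- set (r := sqrt (y1^2+y2^2)) in *. set (q := sqrt Q) in *. set (t := sqrt 2) in *.
  set (K := exp c4) in *. clearbody r q t K Q.
  field_simplify_eq; [clear hs hQ; cbn [pow] in *; nsatz|repeat split; auto; lra].
Qed.

Lemma Fs_pos s c1 c2 c3 K x1 x2 y1 y2 : (s = 1 \/ s = -1) -> 0 < c3 -> 0 < Qf s c1 c2 c3 x1 x2 ->
  0 < y1^2+y2^2 -> 0 < K -> 0 < Fs s c1 c2 c3 K x1 x2 y1 y2.
Proof.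
intros hs hc hQ hy hK. unfold Fs, rr, ww.
assert (hr : sqrt (y1^2+y2^2) * sqrt (y1^2+y2^2) = y1^2+y2^2) by (apply sqrt_sqrt; lra).
assert (hr0 : 0 < sqrt (y1^2+y2^2)) by (apply sqrt_lt_R0; lra).
set (r := sqrt (y1^2+y2^2)) in *. clearbody r.
replace (K * (Qf s c1 c2 c3 x1 x2 * r + s * ((x2 + c2) * y1 - (x1 + c1) * y2) ^ 2 / (2 * r)))
  with (K * / (2 * r) * (2 * Qf s c1 c2 c3 x1 x2 * (r * r) + s * ((x2 + c2) * y1 - (x1 + c1) * y2) ^ 2))
  by (field; lra).
apply Rmult_lt_0_compat.
- apply Rmult_lt_0_compat; auto. apply Rinv_0_lt_compat; lra.
- rewrite hr. destruct hs; subst s.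
  + assert (0 < Qf 1 c1 c2 c3 x1 x2 * (y1^2+y2^2)) by (apply Rmult_lt_0_compat; auto).
    assert (0 <= ((x2 + c2) * y1 - (x1 + c1) * y2) ^ 2) by apply pow2_ge_0. nra.
  + unfold Qf in *. set (u1 := x1 + c1) in *. set (u2 := x2 + c2) in *.
    assert (0 <= (u1*y1 + u2*y2)^2) by apply pow2_ge_0.
    assert (0 <= (u1^2+u2^2)*(y1^2+y2^2)) by nra.
    assert (0 < c3 * (y1^2+y2^2)) by nra.
    replace (2 * (c3 - -1 * u1 ^ 2 - -1 * u2 ^ 2) * (y1 ^ 2 + y2 ^ 2) + -1 * (u2 * y1 - u1 * y2) ^ 2)
      with (2 * (c3 * (y1^2+y2^2)) + (u1^2+u2^2)*(y1^2+y2^2) + (u1*y1 + u2*y2)^2) by ring.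
    lra.
Qed.

Lemma alg2 F F1 F2 D a b c d T0 T1 y1 y2 : F <> 0 -> a*d - b*c <> 0 ->
  F*F1 = a*y1+b*y2 -> F*F2 = c*y1+d*y2 -> T0 = 2*F1*D -> T1 = 2*F2*D ->
  / 4 * (d / (a*d-b*c) * T0 + - b / (a*d-b*c) * T1) = D/(2*F)*y1 /\
  / 4 * (- c / (a*d-b*c) * T0 + a / (a*d-b*c) * T1) = D/(2*F)*y2.
Proof.
intros hF hd hA hB -> ->.
assert (e1 : F1 = (a*y1+b*y2)/F) by (rewrite <- hA; field; auto).
assert (e2 : F2 = (c*y1+d*y2)/F) by (rewrite <- hB; field; auto).
rewrite e1, e2. split; field; auto.
Qed.

Lemma lin1 F F1 F2 Fi Y0 Y1 y1 y2 : F1*y1+F2*y2 = F -> Y0*y1 + Y1*y2 = 0 ->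
  F*Fi = /2*(2*(Fi*F1 + F*Y0))*y1 + /2*(2*(Fi*F2+F*Y1))*y2.
Proof. intros e1 e2. replace (/2*(2*(Fi*F1 + F*Y0))*y1 + /2*(2*(Fi*F2+F*Y1))*y2)
  with (Fi*(F1*y1+F2*y2) + F*(Y0*y1 + Y1*y2)) by field. rewrite e1, e2. ring. Qed.

Lemma lin2 F Fl Fx1 Fx2 Fxl X0 X1 y1 y2 : X0*y1 + X1*y2 = Fxl ->
  2*(Fx1*Fl + F*X0)*y1 + 2*(Fx2*Fl + F*X1)*y2 - 2*F*Fxl = 2*Fl*(Fx1*y1+Fx2*y2).
Proof. intros e. rewrite <- e. ring. Qed.


Lemma LA s c1 c2 c3 c4 U : (s = 1 \/ s = -1) -> open2 U ->
  (forall x1 x2, U x1 x2 -> 0 < Qf s c1 c2 c3 x1 x2) ->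
  forall x1 x2 y1 y2, Wp U x1 x2 y1 y2 -> forall k,
  hasPD (Lsq (F_f s c1 c2 c3 c4)) k x1 x2 y1 y2 /\
  pd (Lsq (F_f s c1 c2 c3 c4)) k x1 x2 y1 y2 =
    2 * Fs s c1 c2 c3 (exp c4) x1 x2 y1 y2 * FdE s c1 c2 c3 (exp c4) k x1 x2 y1 y2.
Proof.
intros hs hU hQ x1 x2 y1 y2 hW k. apply PDV.
apply dpl_loc with (f := along (Lsq (Fs s c1 c2 c3 (exp c4))) k x1 x2 y1 y2).
- apply along_loc with U; auto. intros z1 z2 z3 z4 [hz _]. unfold Lsq. rewrite Ff_eq; auto.
- apply dpl_ext with (f := fun t => (along (Fs s c1 c2 c3 (exp c4)) k x1 x2 y1 y2 t)^2).
  + intro t; symmetry; apply along_sq.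
  + pose proof (dsq _ _ _ (dF s c1 c2 c3 (exp c4) k x1 x2 y1 y2 (proj2 hW))) as h.
    rewrite along_at in h; exact h.
Qed.

Lemma LB s c1 c2 c3 c4 U : (s = 1 \/ s = -1) -> open2 U ->
  (forall x1 x2, U x1 x2 -> 0 < Qf s c1 c2 c3 x1 x2) ->
  forall x1 x2 y1 y2, Wp U x1 x2 y1 y2 -> forall l k,
  hasPD (Ly (F_f s c1 c2 c3 c4) l) k x1 x2 y1 y2 /\
  pd (Ly (F_f s c1 c2 c3 c4) l) k x1 x2 y1 y2 =
    2 * (FdE s c1 c2 c3 (exp c4) k x1 x2 y1 y2 * FdE s c1 c2 c3 (exp c4) (2+l) x1 x2 y1 y2
         + Fs s c1 c2 c3 (exp c4) x1 x2 y1 y2 * FyyE s c1 c2 c3 (exp c4) l k x1 x2 y1 y2).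
Proof.
intros hs hU hQ x1 x2 y1 y2 hW l k. apply PDV.
apply dpl_loc with (f := along (fun z1 z2 z3 z4 => 2 * Fs s c1 c2 c3 (exp c4) z1 z2 z3 z4
                                   * FdE s c1 c2 c3 (exp c4) (2+l) z1 z2 z3 z4) k x1 x2 y1 y2).
- apply along_loc with U; auto. intros z1 z2 z3 z4 hz. unfold Ly.
  symmetry. apply (LA s c1 c2 c3 c4 U hs hU hQ z1 z2 z3 z4 hz (2+l)).
- apply dpl_ext with (f := fun t => 2 * along (Fs s c1 c2 c3 (exp c4)) k x1 x2 y1 y2 t
                                      * along (FdE s c1 c2 c3 (exp c4) (2+l)) k x1 x2 y1 y2 t).
  + intro t; symmetry; apply along_prod.
  + pose proof (dprod2 _ _ _ _ _ (dF s c1 c2 c3 (exp c4) k x1 x2 y1 y2 (proj2 hW))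
                  (dFy s c1 c2 c3 (exp c4) l k x1 x2 y1 y2 (proj2 hW))) as h.
    rewrite !along_at in h; exact h.
Qed.

Lemma part1 s c1 c2 c3 c4 U : (s = 1 \/ s = -1) -> 0 < c3 -> open2 U ->
  (forall x1 x2, U x1 x2 -> 0 < Qf s c1 c2 c3 x1 x2) ->
  projectively_flat_on (F_f s c1 c2 c3 c4) U.
Proof.
intros hs hc hU hQ.
assert (hWp : forall x1 x2 y1 y2, U x1 x2 -> (y1, y2) <> (0, 0) -> Wp U x1 x2 y1 y2).
{ intros x1 x2 y1 y2 hx hy. split; auto.
  destruct (Req_dec y1 0) as [->|h1]; [destruct (Req_dec y2 0) as [->|h2]|].
  - exfalso; auto.
  - nra.
  - nra. }
split.
- intros x1 x2 y1 y2 hx hy. pose proof (hWp _ _ _ _ hx hy) as hW. split.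
  + intros k _. apply (LA s c1 c2 c3 c4 U hs hU hQ _ _ _ _ hW).
  + intros l k _ _. apply (LB s c1 c2 c3 c4 U hs hU hQ _ _ _ _ hW).
- exists (fun x1 x2 y1 y2 =>
    (FdE s c1 c2 c3 (exp c4) 0 x1 x2 y1 y2 * y1 + FdE s c1 c2 c3 (exp c4) 1 x1 x2 y1 y2 * y2)
    / (2 * Fs s c1 c2 c3 (exp c4) x1 x2 y1 y2)).
  intros x1 x2 y1 y2 hx hy hdet. pose proof (hWp _ _ _ _ hx hy) as hW.
  pose proof (fun l k => proj2 (LB s c1 c2 c3 c4 U hs hU hQ _ _ _ _ hW l k)) as eB.
  pose proof (fun k => proj2 (LA s c1 c2 c3 c4 U hs hU hQ _ _ _ _ hW k)) as eA.
  unfold spray, ginv, sprayTerm, gdet, gmet in *. rewrite !eB in *. rewrite !eA.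
  cbv beta.
  pose proof (Fs_pos s c1 c2 c3 (exp c4) x1 x2 y1 y2 hs hc (hQ _ _ hx) (proj2 hW) (exp_pos c4)) as hF.
  pose proof (I1 s c1 c2 c3 (exp c4) x1 x2 y1 y2 (proj2 hW)) as i1.
  eapply alg2.
  + apply Rgt_not_eq; exact hF.
  + exact hdet.
  + apply lin1 with (F2 := FdE s c1 c2 c3 (exp c4) 3 x1 x2 y1 y2); [exact i1|].
    apply (I2 s c1 c2 c3 (exp c4) 0 x1 x2 y1 y2 (proj2 hW)).
  + apply lin1 with (F2 := FdE s c1 c2 c3 (exp c4) 3 x1 x2 y1 y2); [exact i1|].
    apply (I2 s c1 c2 c3 (exp c4) 1 x1 x2 y1 y2 (proj2 hW)).
  + apply lin2. apply (IH s c1 c2 c3 (exp c4) 0 x1 x2 y1 y2); [lia|exact (proj2 hW)].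
  + apply lin2. apply (IH s c1 c2 c3 (exp c4) 1 x1 x2 y1 y2); [lia|exact (proj2 hW)].
Qed.

Lemma b_eq s c1 c2 c3 c4 x1 x2 : 0 < Qf s c1 c2 c3 x1 x2 ->
  b1_f s c1 c2 c3 c4 x1 x2 = exp c4 * s * / sqrt 2 * (x2 + c2) * sqrt (Qf s c1 c2 c3 x1 x2) /\
  b2_f s c1 c2 c3 c4 x1 x2 = - exp c4 * s * / sqrt 2 * (x1 + c1) * sqrt (Qf s c1 c2 c3 x1 x2).
Proof.
intros hQ. unfold b1_f, b2_f, xi_f, eta_f, sigma_f. rewrite exp_plus, exp_ln by auto.
assert (hq : sqrt (Qf s c1 c2 c3 x1 x2) * sqrt (Qf s c1 c2 c3 x1 x2) = Qf s c1 c2 c3 x1 x2)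
  by (apply sqrt_sqrt; lra).
assert (hq0 : sqrt (Qf s c1 c2 c3 x1 x2) <> 0) by (apply Rgt_not_eq, sqrt_lt_R0; lra).
assert (ht0 : sqrt 2 <> 0) by (apply Rgt_not_eq, sqrt_lt_R0; lra).
set (q := sqrt (Qf s c1 c2 c3 x1 x2)) in *. set (Q := Qf s c1 c2 c3 x1 x2) in *.
clearbody q Q. subst Q. split; field; auto.
Qed.

Lemma closed_val s c1 c2 c3 c4 U x1 x2 : open2 U ->
  (forall x1 x2, U x1 x2 -> 0 < Qf s c1 c2 c3 x1 x2) -> U x1 x2 ->
  pd (lift2 (b2_f s c1 c2 c3 c4)) 0 x1 x2 0 0 - pd (lift2 (b1_f s c1 c2 c3 c4)) 1 x1 x2 0 0
  = - exp c4 * s * / sqrt 2 *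
      (2 * Qf s c1 c2 c3 x1 x2 - s * ((x1+c1)^2 + (x2+c2)^2)) / sqrt (Qf s c1 c2 c3 x1 x2).
Proof.
intros hU hQ hx. destruct (hU x1 x2 hx) as [e [he hE]].
assert (z0 : forall a, Rabs (a - a) < e) by (intro a; replace (a - a) with 0 by ring; rewrite Rabs_R0; auto).
pose proof (hQ _ _ hx) as hq.
assert (hq0 : sqrt (Qf s c1 c2 c3 x1 x2) <> 0) by (apply Rgt_not_eq, sqrt_lt_R0; lra).
assert (ht0 : sqrt 2 <> 0) by (apply Rgt_not_eq, sqrt_lt_R0; lra).
assert (d2 : derivable_pt_lim (along (lift2 (b2_f s c1 c2 c3 c4)) 0 x1 x2 0 0) (coord 0 x1 x2 0 0)
   (- exp c4 * s * / sqrt 2 * (sqrt (Qf s c1 c2 c3 x1 x2) - s * (x1+c1)^2 / sqrt (Qf s c1 c2 c3 x1 x2)))).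
{ apply dpl_loc with (f := fun t => - exp c4 * s * / sqrt 2 * (t + c1) * sqrt (Qf s c1 c2 c3 t x2)).
  - exists e; split; auto. intros t ht. simpl. unfold lift2. symmetry. apply b_eq, hQ, hE; auto.
  - apply is_derive_Reals. simpl. unfold Qf in *.
    auto_derive; [lra|]. field_simplify_eq; auto. 
    assert (hs: sqrt (c3 - s * (x1 + c1) ^ 2 - s * (x2 + c2) ^ 2) * sqrt (c3 - s * (x1 + c1) ^ 2 - s * (x2 + c2) ^ 2) = c3 - s * (x1 + c1) ^ 2 - s * (x2 + c2) ^ 2) by (apply sqrt_sqrt; lra).
    cbn [pow] in *. nsatz. }
assert (d1 : derivable_pt_lim (along (lift2 (b1_f s c1 c2 c3 c4)) 1 x1 x2 0 0) (coord 1 x1 x2 0 0)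
   (exp c4 * s * / sqrt 2 * (sqrt (Qf s c1 c2 c3 x1 x2) - s * (x2+c2)^2 / sqrt (Qf s c1 c2 c3 x1 x2)))).
{ apply dpl_loc with (f := fun t => exp c4 * s * / sqrt 2 * (t + c2) * sqrt (Qf s c1 c2 c3 x1 t)).
  - exists e; split; auto. intros t ht. simpl. unfold lift2. symmetry. apply b_eq, hQ, hE; auto.
  - apply is_derive_Reals. simpl. unfold Qf in *.
    auto_derive; [lra|]. field_simplify_eq; auto.
    assert (hs: sqrt (c3 - s * (x1 + c1) ^ 2 - s * (x2 + c2) ^ 2) * sqrt (c3 - s * (x1 + c1) ^ 2 - s * (x2 + c2) ^ 2) = c3 - s * (x1 + c1) ^ 2 - s * (x2 + c2) ^ 2) by (apply sqrt_sqrt; lra).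
    cbn [pow] in *. nsatz. }
rewrite (proj2 (PDV _ _ _ _ _ _ _ d2)), (proj2 (PDV _ _ _ _ _ _ _ d1)).
assert (hqq : sqrt (Qf s c1 c2 c3 x1 x2) * sqrt (Qf s c1 c2 c3 x1 x2) = Qf s c1 c2 c3 x1 x2)
  by (apply sqrt_sqrt; lra).
set (q := sqrt (Qf s c1 c2 c3 x1 x2)) in *. set (Q := Qf s c1 c2 c3 x1 x2) in *.
clearbody q Q. subst Q. field; auto.
Qed.

Lemma part2 s c1 c2 c3 c4 U : (s = 1 \/ s = -1) -> open2 U -> (exists x1 x2, U x1 x2) ->
  (forall x1 x2, U x1 x2 -> 0 < Qf s c1 c2 c3 x1 x2) ->
  ~ one_form_closed_on (b1_f s c1 c2 c3 c4) (b2_f s c1 c2 c3 c4) U.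
Proof.
intros hs hU [a1 [a2 ha]] hQ hcl. destruct (hU a1 a2 ha) as [e [he hE]].
assert (hs0 : s <> 0) by (destruct hs; lra).
assert (key : forall d, Rabs d < e ->
  2 * Qf s c1 c2 c3 (a1+d) a2 - s * ((a1+d+c1)^2 + (a2+c2)^2) = 0).
{ intros d hd. assert (hx : U (a1+d) a2).
  { apply hE. replace (a1 + d - a1) with d by ring; auto.
    replace (a2 - a2) with 0 by ring; rewrite Rabs_R0; auto. }
  pose proof (proj2 (hcl _ _ hx)) as h0. rewrite closed_val with (U := U) in h0 by auto.
  pose proof (hQ _ _ hx) as hq.
  assert (hq0 : sqrt (Qf s c1 c2 c3 (a1+d) a2) <> 0) by (apply Rgt_not_eq, sqrt_lt_R0; lra).
  assert (ht0 : sqrt 2 <> 0) by (apply Rgt_not_eq, sqrt_lt_R0; lra).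
  assert (hK : exp c4 <> 0) by (apply Rgt_not_eq, exp_pos).
  set (X := 2 * Qf s c1 c2 c3 (a1+d) a2 - s * ((a1+d+c1)^2 + (a2+c2)^2)) in *.
  set (q := sqrt (Qf s c1 c2 c3 (a1+d) a2)) in *.
  assert (X = (- exp c4 * s * / sqrt 2 * X / q) * (- q * sqrt 2 / (exp c4 * s)))
    by (field; repeat split; auto).
  rewrite H, h0. ring. }
pose proof (key 0) as k0. pose proof (key (e/4)) as k1. pose proof (key (e/2)) as k2.
assert (Rabs 0 < e) by (rewrite Rabs_R0; auto).
assert (Rabs (e/4) < e) by (rewrite Rabs_right; lra).
assert (Rabs (e/2) < e) by (rewrite Rabs_right; lra).
specialize (k0 H); specialize (k1 H0); specialize (k2 H1). unfold Qf in *.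
destruct hs; subst s; nra.
Qed.

Theorem mainTheorem4 (s c1 c2 c3 c4 : R) (U : R -> R -> Prop) :
  (s = 1 \/ s = -1) ->
  0 < c3 ->
  open2 U ->
  (exists x1 x2, U x1 x2) ->
  (forall x1 x2, U x1 x2 -> 0 < Qf s c1 c2 c3 x1 x2) ->
  projectively_flat_on (F_f s c1 c2 c3 c4) U /\
  ~ one_form_closed_on (b1_f s c1 c2 c3 c4) (b2_f s c1 c2 c3 c4) U.
Proof.
intros hs hc hU hne hQ. split.
- apply part1; auto.
- apply part2; auto.
Qed.
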